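(* Let $\boldsymbol\beta\in\mathbb R^p$ have support $\mathcal A$ with $\boldsymbol z_{\mathcal A}=\mathbf 1$ (all nonzero entries positive), let $\lambda>0$, and let $\tilde{\mathbf Z}$ be any $p\times p$ diagonal matrix with diagonal entries in $\{-1,+1\}$; put $\tilde{\boldsymbol\beta}=\tilde{\mathbf Z}\boldsymbol\beta$. Then for every design $\mathbf X$, $\phi_\lambda(\mathbf X\mid\tilde{\boldsymbol\beta})=\phi_\lambda(\mathbf X\tilde{\mathbf Z}\mid\boldsymbol\beta)$. Moreover, if $\mathbf X^*$ maximizes $\phi_\lambda(\cdot\mid\boldsymbol\beta)$ over all designs, then $\mathbf X^*\tilde{\mathbf Z}$ maximizes $\phi_\lambda(\cdot\mid\tilde{\boldsymbol\beta})$ over all designs.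
   Context: A design is an $n\times p$ matrix $\mathbf X$ with entries in $\{-1,+1\}$. Let $\mathbf P_1=n^{-1}\mathbf 1\mathbf 1^T$, let $\mathbf V$ be the diagonal matrix whose diagonal entries are those of $n^{-1}\mathbf X^T(\mathbf I-\mathbf P_1)\mathbf X$, let $\mathbf F=(\mathbf I-\mathbf P_1)\mathbf X\mathbf V^{-1/2}$ and $\mathbf C=n^{-1}\mathbf F^T\mathbf F$. For $\boldsymbol\beta\in\mathbb R^p$, its support is $\mathcal A=\{j:\beta_j\neq0\}$ with $|\mathcal A|=k\ge1$, $\mathcal I$ is the complement, $\boldsymbol z=\mathrm{sign}(\boldsymbol\beta)$, $\mathbf Z_{\mathcal A}=\mathrm{Diag}(\boldsymbol z_{\mathcal A})$. Subscripts: $\mathbf F_{\mathcal T}$ = columns in $\mathcal T$; $\boldsymbol w_{\mathcal T}$ = subvector; $\mathbf M_{\mathcal U\mathcal T}$ = rows $\mathcal U$, columns $\mathcal T$; $\mathbf M_{\mathcal T}=\mathbf M_{\mathcal T\mathcal T}$. Designs considered are those with $\mathbf C_{\mathcal A}$ invertible and positive diagonal of $\mathbf V_{\mathcal A}$. Let $\mathbf P_{\mathcal A}=\mathbf F_{\mathcal A}(\mathbf F_{\mathcal A}^T\mathbf F_{\mathcal A})^{-1}\mathbf F_{\mathcal A}^T$, $\lambda_n=\lambda\sqrt n$, $\boldsymbol e\sim N(\mathbf 0,\mathbf I_n)$, $\boldsymbol u=-n^{-1/2}\mathbf Z_{\mathcal A}\mathbf C_{\mathcal A}^{-1}\mathbf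 F_{\mathcal A}^T\boldsymbol e+\lambda_n\mathbf Z_{\mathcal A}\mathbf C_{\mathcal A}^{-1}\boldsymbol z_{\mathcal A}$, $\boldsymbol v=n^{-1/2}\mathbf F_{\mathcal I}^T(\mathbf I-\mathbf P_{\mathcal A})\boldsymbol e+\lambda_n\mathbf C_{\mathcal I\mathcal A}\mathbf C_{\mathcal A}^{-1}\boldsymbol z_{\mathcal A}$, $S_\lambda=\{\boldsymbol u<\sqrt n\,\mathbf Z_{\mathcal A}\mathbf V_{\mathcal A}^{1/2}\boldsymbol\beta_{\mathcal A}\}$ and $I_\lambda=\{|\boldsymbol v|\le\lambda_n\mathbf 1\}$ (componentwise). The sign recovery criterion of design $\mathbf X$ under $\boldsymbol\beta$ is $\phi_\lambda(\mathbf X\mid\boldsymbol\beta)=P(S_\lambda\cap I_\lambda)$, with all quantities computed from $\mathbf X$ and $\boldsymbol\beta$. *)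

(* Defs.v *)
From HB Require Import structures.
From mathcomp Require Import all_boot all_order all_algebra.
From mathcomp Require Import all_classical all_reals all_analysis.
From mathcomp Require Import normal_distribution.
Set Implicit Arguments. Unset Strict Implicit. Unset Printing Implicit Defensive.
Import Order.TTheory GRing.Theory Num.Theory.
Local Open Scope classical_set_scope.
Local Open Scope ring_scope.

Section Defs.
Variable R : realType.

Definition vcons (m : nat) (t : R) (x : 'I_m -> R) : 'I_m.+1 -> R :=
  fun i => match unlift ord0 i with Some j => x j | None => t end.

(* iterated integral of f against the standard Gaussian N(0,1) in each
   coordinate, i.e. integration against N(0, I_n) on R^n (product measure) *)
Fixpoint gauss_int (n : nat) : (('I_n -> R) -> \bar R) -> \bar R :=
  match n with
  | 0 => fun f => f (fun i => 0)
  | m.+1 => fun f =>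
      (\int[normal_prob (0:R) 1]_t gauss_int (fun x => f (vcons t x)))%E
  end.

Definition gauss_prob (n : nat) (E : set 'cV[R]_n) : \bar R :=
  gauss_int (fun x : 'I_n -> R => ((\1_E (\col_i x i) : R))%:E).

Variables (n p : nat).

Definition is_design (X : 'M[R]_(n, p)) : Prop :=
  forall i j, X i j = 1 \/ X i j = -1.

Definition support (beta : 'cV[R]_p) : {set 'I_p} := [set j | beta j 0 != 0].

Definition idxA (beta : 'cV[R]_p) (j : 'I_#|support beta|) : 'I_p := enum_val j.
Definition idxI (beta : 'cV[R]_p) (j : 'I_#|~: support beta|) : 'I_p := enum_val j.

Definition P1 : 'M[R]_n := (n%:R)^-1 *: const_mx 1.

Definition Vmat (X : 'M[R]_(n, p)) : 'M[R]_p :=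
  let M := (n%:R)^-1 *: (X^T *m (1%:M - P1) *m X) in
  \matrix_(i, j) ((i == j)%:R * M i j).
Definition Vpow_mhalf (X : 'M[R]_(n, p)) : 'M[R]_p :=
  \matrix_(i, j) ((i == j)%:R * (Num.sqrt (Vmat X i i))^-1).

Definition Fmat (X : 'M[R]_(n, p)) : 'M[R]_(n, p) :=
  (1%:M - P1) *m X *m Vpow_mhalf X.
Definition Cmat (X : 'M[R]_(n, p)) : 'M[R]_p :=
  (n%:R)^-1 *: ((Fmat X)^T *m Fmat X).

Section Crit.
Variables (lam : R) (X : 'M[R]_(n, p)) (beta : 'cV[R]_p).
Local Notation A := (support beta).
Definition F_A : 'M[R]_(n, #|A|) := colsub (@idxA beta) (Fmat X).
Definition F_I : 'M[R]_(n, #|~: A|) := colsub (@idxI beta) (Fmat X).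
Definition C_A : 'M[R]_#|A| := mxsub (@idxA beta) (@idxA beta) (Cmat X).
Definition C_IA : 'M[R]_(#|~: A|, #|A|) := mxsub (@idxI beta) (@idxA beta) (Cmat X).
Definition V_A : 'M[R]_#|A| := mxsub (@idxA beta) (@idxA beta) (Vmat X).
Definition V_A_half : 'M[R]_#|A| :=
  \matrix_(i, j) ((i == j)%:R * Num.sqrt (V_A i i)).
Definition beta_A : 'cV[R]_#|A| := rowsub (@idxA beta) beta.
Definition z_A : 'cV[R]_#|A| := \col_j Num.sg (beta_A j 0).
Definition Z_A : 'M[R]_#|A| := diag_mx (z_A^T).
Definition P_A : 'M[R]_n := F_A *m invmx (F_A^T *m F_A) *m F_A^T.
Definition lam_n : R := lam * Num.sqrt (n%:R).

Definition u_vec (e : 'cV[R]_n) : 'cV[R]_#|A| :=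
  - ((Num.sqrt (n%:R))^-1 *: (Z_A *m invmx C_A *m F_A^T *m e))
  + lam_n *: (Z_A *m invmx C_A *m z_A).
Definition v_vec (e : 'cV[R]_n) : 'cV[R]_#|~: A| :=
  (Num.sqrt (n%:R))^-1 *: (F_I^T *m (1%:M - P_A) *m e)
  + lam_n *: (C_IA *m invmx C_A *m z_A).

Definition S_event : set 'cV[R]_n :=
  [set e | forall j, u_vec e j 0 < (Num.sqrt (n%:R) *: (Z_A *m V_A_half *m beta_A)) j 0].
Definition I_event : set 'cV[R]_n :=
  [set e | forall j, `|v_vec e j 0| <= lam_n].

Definition phi_crit : \bar R := gauss_prob (S_event `&` I_event).

Definition admissible : Prop :=
  is_design X /\ C_A \in unitmx /\ (forall j, 0 < V_A j j).
End Crit.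

Definition is_maximizer (lam : R) (beta : 'cV[R]_p) (Xs : 'M[R]_(n, p)) : Prop :=
  admissible Xs beta /\
  forall X, admissible X beta -> (phi_crit lam X beta <= phi_crit lam Xs beta)%E.

End Defs.

(* Main.v *)
Require Import Defs.
From HB Require Import structures.
From mathcomp Require Import all_boot all_order all_algebra.
From mathcomp Require Import all_classical all_reals all_analysis.
Set Implicit Arguments. Unset Strict Implicit.
Import Order.TTheory GRing.Theory Num.Theory.
Local Open Scope ring_scope.

Section Basic.
Variable R : realType.

Definition signrow m (d : 'rV[R]_m) := forall j, d 0 j = 1 \/ d 0 j = -1.
Arguments signrow {m}.

Lemma sign_sq m (d : 'rV[R]_m) j : signrow d -> d 0 j * d 0 j = 1.
Proof. by move=> h; case: (h j) => ->; rewrite ?mulr1 ?mulrNN ?mulr1. Qed.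

Lemma diag_sq m (d : 'rV[R]_m) : signrow d -> diag_mx d *m diag_mx d = 1%:M.
Proof.
move=> h; rewrite mulmx_diag; apply/matrixP => i j; rewrite !mxE sign_sq //.
Qed.

Lemma conj_entry m k (d : 'rV[R]_m) (N : 'M[R]_(m, k)) (e : 'rV[R]_k) i j :
  (diag_mx d *m N *m diag_mx e) i j = d 0 i * N i j * e 0 j.
Proof. by rewrite mul_mx_diag mxE mul_diag_mx mxE. Qed.

Lemma invconj m (S M : 'M[R]_m) : S *m S = 1%:M ->
  invmx (S *m M *m S) = S *m invmx M *m S.
Proof.
move=> SS; have [Su _] := mulmx1_unit SS.
have [Mu|Mnu] := boolP (M \in unitmx).
  have Pu : S *m M *m S \in unitmx by rewrite !unitmx_mul Su Mu.
  have PQ : (S *m M *m S) *m (S *m invmx M *m S) = 1%:M.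
    by rewrite !mulmxA -(mulmxA _ S S) SS mulmx1 -(mulmxA _ M) mulmxV // mulmx1.
  by rewrite -[RHS]mul1mx -(mulVmx Pu) -(mulmxA (invmx _)) PQ mulmx1.
have Pnu : S *m M *m S \notin unitmx by rewrite !unitmx_mul Su (negbTE Mnu).
by rewrite !invmx_out.
Qed.
End Basic.

Section Z.
Variables (R : realType) (n p : nat) (s : 'rV[R]_p).
Hypothesis hs : signrow s.
Local Notation Zt := (diag_mx s).

Lemma Vmat_Z (X : 'M[R]_(n, p)) : Vmat (X *m Zt) = Vmat X.
Proof.
rewrite /Vmat.
have -> : (X *m Zt)^T *m (1%:M - @P1 R n) *m (X *m Zt)
          = Zt *m (X^T *m (1%:M - @P1 R n) *m X) *m Zt.
  by rewrite trmx_mul tr_diag_mx !mulmxA.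
set N := X^T *m _ *m X.
apply/matrixP => i j; rewrite mxE [RHS]mxE.
rewrite [X in _ * X = _]mxE [X in _ = _ * X]mxE conj_entry.
case: eqVneq => [<-|_]; last by rewrite !mul0r.
have E : s 0 i * N i i * s 0 i = N i i.
  by rewrite (mulrC _ (s 0 i)) mulrA sign_sq // mul1r.
by rewrite E.
Qed.

Lemma Vph_Z (X : 'M[R]_(n, p)) : Vpow_mhalf (X *m Zt) = Vpow_mhalf X.
Proof. by rewrite /Vpow_mhalf Vmat_Z. Qed.

Lemma Vph_comm (X : 'M[R]_(n, p)) : Zt *m Vpow_mhalf X = Vpow_mhalf X *m Zt.
Proof.
apply/matrixP => i j; rewrite mul_diag_mx mul_mx_diag !mxE.
case: eqVneq => [->|_]; first by rewrite mulrC.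
by rewrite !mul0r mulr0.
Qed.

Lemma Fmat_Z (X : 'M[R]_(n, p)) : Fmat (X *m Zt) = Fmat X *m Zt.
Proof. by rewrite /Fmat Vph_Z -!mulmxA Vph_comm. Qed.

Lemma Cmat_Z (X : 'M[R]_(n, p)) : Cmat (X *m Zt) = Zt *m Cmat X *m Zt.
Proof.
rewrite /Cmat Fmat_Z trmx_mul tr_diag_mx; move: (Fmat X) => F.
by rewrite -scalemxAr -scalemxAl !mulmxA.
Qed.

Lemma design_Z (X : 'M[R]_(n, p)) : is_design X -> is_design (X *m Zt).
Proof.
move=> hX i j; rewrite mul_mx_diag mxE.
by case: (hX i j) => ->; case: (hs j) => ->; rewrite ?mulr1 ?mulrNN ?mulr1 ?mul1r; auto.
Qed.

Lemma ZZ : Zt *m Zt = 1%:M. Proof. exact: diag_sq. Qed.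
End Z.

Section Gen.
Variables (R : realType) (n p : nat) (A : {set 'I_p}).
Definition gidx (j : 'I_#|A|) : 'I_p := enum_val j.
Definition gidxc (j : 'I_#|~: A|) : 'I_p := enum_val j.
Variables (lam : R) (X : 'M[R]_(n, p)) (b : 'cV[R]_p).
Definition gFA : 'M[R]_(n, #|A|) := colsub gidx (Fmat X).
Definition gFI : 'M[R]_(n, #|~: A|) := colsub gidxc (Fmat X).
Definition gCA : 'M[R]_#|A| := mxsub gidx gidx (Cmat X).
Definition gCIA : 'M[R]_(#|~: A|, #|A|) := mxsub gidxc gidx (Cmat X).
Definition gVA : 'M[R]_#|A| := mxsub gidx gidx (Vmat X).
Definition gVAh : 'M[R]_#|A| := \matrix_(i, j) ((i == j)%:R * Num.sqrt (gVA i i)).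
Definition gbA : 'cV[R]_#|A| := rowsub gidx b.
Definition gzA : 'cV[R]_#|A| := \col_j Num.sg (gbA j 0).
Definition gZA : 'M[R]_#|A| := diag_mx (gzA^T).
Definition gPA : 'M[R]_n := gFA *m invmx (gFA^T *m gFA) *m gFA^T.
Definition gu (e : 'cV[R]_n) : 'cV[R]_#|A| :=
  - ((Num.sqrt (n%:R))^-1 *: (gZA *m invmx gCA *m gFA^T *m e))
  + lam_n n lam *: (gZA *m invmx gCA *m gzA).
Definition gv (e : 'cV[R]_n) : 'cV[R]_#|~: A| :=
  (Num.sqrt (n%:R))^-1 *: (gFI^T *m (1%:M - gPA) *m e)
  + lam_n n lam *: (gCIA *m invmx gCA *m gzA).
Definition gS : set 'cV[R]_n :=
  [set e | forall j, gu e j 0 < (Num.sqrt (n%:R) *: (gZA *m gVAh *m gbA)) j 0].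
Definition gI : set 'cV[R]_n :=
  [set e | forall j, `|gv e j 0| <= lam_n n lam].
End Gen.

Lemma S_gen (R : realType) n p lam (X : 'M[R]_(n, p)) b :
  S_event lam X b = gS (Defs.support b) lam X b.
Proof. by []. Qed.
Lemma I_gen (R : realType) n p lam (X : 'M[R]_(n, p)) b :
  I_event lam X b = gI (Defs.support b) lam X b.
Proof. by []. Qed.
Lemma CA_gen (R : realType) n p (X : 'M[R]_(n, p)) b :
  C_A X b = gCA (Defs.support b) X.
Proof. by []. Qed.
Lemma VA_gen (R : realType) n p (X : 'M[R]_(n, p)) b :
  V_A X b = gVA (Defs.support b) X.
Proof. by []. Qed.

Lemma sgn_cancel (R : realType) (a w x : R) : a * a = 1 -> a * (w * (a * x)) = w * x.
Proof. by move=> h; rewrite mulrCA (mulrA a) h mul1r. Qed.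

Section Main.
Variables (R : realType) (n p : nat) (A : {set 'I_p}) (s : 'rV[R]_p).
Hypothesis hs : signrow s.
Local Notation Zt := (diag_mx s).
Let sA : 'rV[R]_#|A| := \row_j s 0 (gidx j).
Let SA := diag_mx sA.
Let sI : 'rV[R]_#|~: A| := \row_j s 0 (gidxc j).
Let SI := diag_mx sI.

Lemma sA_sign : signrow sA. Proof. by move=> j; rewrite mxE. Qed.
Lemma sI_sign : signrow sI. Proof. by move=> j; rewrite mxE. Qed.
Lemma SASA : SA *m SA = 1%:M. Proof. exact: diag_sq sA_sign. Qed.
Lemma SA_unit : SA \in unitmx. Proof. by case: (mulmx1_unit SASA). Qed.

Lemma FA_Z (X : 'M[R]_(n, p)) : gFA A (X *m Zt) = gFA A X *m SA.
Proof.
rewrite /gFA Fmat_Z //; move: (Fmat X) => F.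
by apply/matrixP => i j; rewrite !mul_mx_diag !mxE.
Qed.

Lemma FI_Z (X : 'M[R]_(n, p)) : gFI A (X *m Zt) = gFI A X *m SI.
Proof.
rewrite /gFI Fmat_Z //; move: (Fmat X) => F.
by apply/matrixP => i j; rewrite !mul_mx_diag !mxE.
Qed.

Lemma CA_Z (X : 'M[R]_(n, p)) : gCA A (X *m Zt) = SA *m gCA A X *m SA.
Proof.
rewrite /gCA Cmat_Z //; move: (Cmat X) => C.
apply/matrixP => i j; rewrite conj_entry [LHS]mxE conj_entry.
by rewrite !mxE.
Qed.

Lemma CIA_Z (X : 'M[R]_(n, p)) : gCIA A (X *m Zt) = SI *m gCIA A X *m SA.
Proof.
rewrite /gCIA Cmat_Z //; move: (Cmat X) => C.
apply/matrixP => i j; rewrite conj_entry [LHS]mxE conj_entry.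
by rewrite !mxE.
Qed.

Lemma VA_Z (X : 'M[R]_(n, p)) : gVA A (X *m Zt) = gVA A X.
Proof. by rewrite /gVA Vmat_Z. Qed.

Lemma VAh_Z (X : 'M[R]_(n, p)) : gVAh A (X *m Zt) = gVAh A X.
Proof. by rewrite /gVAh VA_Z. Qed.

Lemma VAh_diag (X : 'M[R]_(n, p)) :
  gVAh A X = diag_mx (\row_i Num.sqrt (gVA A X i i)).
Proof.
apply/matrixP => i j; rewrite !mxE.
by case: eqVneq => [->|_]; rewrite ?mul1r ?mul0r ?mulr1n ?mulr0n.
Qed.

Lemma SAK m (M : 'M[R]_(m, #|A|)) : M *m SA *m SA = M.
Proof. by rewrite -mulmxA SASA mulmx1. Qed.

Lemma SA1 : SA *m const_mx 1 = sA^T.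
Proof. by apply/matrixP => i j; rewrite mul_diag_mx !mxE mulr1. Qed.

Variable b : 'cV[R]_p.
Hypothesis hb : forall j : 'I_#|A|, 0 < b (gidx j) 0.

Lemma bA_Z : gbA A (Zt *m b) = SA *m gbA A b.
Proof. by apply/matrixP => i j; rewrite !mul_diag_mx !mxE. Qed.

Lemma zA_b : gzA A b = const_mx 1.
Proof. by apply/matrixP => i j; rewrite !mxE gtr0_sg. Qed.

Lemma zA_b' : gzA A (Zt *m b) = sA^T.
Proof.
apply/matrixP => i j; rewrite mul_diag_mx !mxE sgrM (gtr0_sg (hb i)) mulr1.
by case: (hs (gidx i)) => ->; rewrite ?sgr1 ?sgrN1.
Qed.

Lemma ZA_b : gZA A b = 1%:M.
Proof. by rewrite /gZA zA_b trmx_const diag_const_mx. Qed.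

Lemma ZA_b' : gZA A (Zt *m b) = SA.
Proof. by rewrite /gZA zA_b' trmxK. Qed.
Lemma u_Z lam (X : 'M[R]_(n, p)) e :
  gu A lam X (Zt *m b) e = gu A lam (X *m Zt) b e.
Proof.
rewrite /gu FA_Z CA_Z ZA_b ZA_b' zA_b zA_b' invconj ?SASA //.
rewrite trmx_mul tr_diag_mx !mul1mx.
congr (- (_ *: _) + _ *: _).
  by rewrite !mulmxA -(mulmxA _ SA SA) SASA mulmx1.
by rewrite -!mulmxA SA1.
Qed.

Lemma rhs_Z (X : 'M[R]_(n, p)) :
  gZA A (Zt *m b) *m gVAh A X *m gbA A (Zt *m b)
  = gZA A b *m gVAh A (X *m Zt) *m gbA A b.
Proof.
rewrite ZA_b' ZA_b bA_Z VAh_Z mul1mx VAh_diag.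
apply/matrixP => i j; rewrite -!mulmxA !mul_diag_mx !mxE.
apply: sgn_cancel; exact: (sign_sq (gidx i) hs).
Qed.

Lemma gS_Z lam (X : 'M[R]_(n, p)) :
  gS A lam X (Zt *m b) = gS A lam (X *m Zt) b.
Proof.
rewrite /gS rhs_Z; apply: funext => e /=.
by rewrite (u_Z lam X e).
Qed.

Lemma PA_Z (X : 'M[R]_(n, p)) : gPA A (X *m Zt) = gPA A X.
Proof.
rewrite /gPA FA_Z trmx_mul tr_diag_mx.
set F := gFA A X.
have -> : SA *m F^T *m (F *m SA) = SA *m (F^T *m F) *m SA by rewrite !mulmxA.
rewrite invconj ?SASA //; set G := invmx _.
rewrite !mulmxA -(mulmxA F SA SA) SASA mulmx1.
by rewrite -(mulmxA (F *m G) SA SA) SASA mulmx1.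
Qed.

Lemma v_Z lam (X : 'M[R]_(n, p)) e :
  gv A lam (X *m Zt) b e = SI *m gv A lam X (Zt *m b) e.
Proof.
rewrite /gv PA_Z FI_Z CA_Z CIA_Z zA_b zA_b' invconj ?SASA //.
rewrite trmx_mul tr_diag_mx [RHS]mulmxDr -!(scalemxAr _ SI).
congr (_ *: _ + _ *: _); first by rewrite !mulmxA.
rewrite !mulmxA SAK.
by rewrite -(mulmxA _ SA) SA1.
Qed.

Lemma gI_Z lam (X : 'M[R]_(n, p)) :
  gI A lam X (Zt *m b) = gI A lam (X *m Zt) b.
Proof.
rewrite /gI; apply: funext => e.
have N j : `|(gv A lam (X *m Zt) b e) j 0| = `|gv A lam X (Zt *m b) e j 0|.
  rewrite v_Z mul_diag_mx mxE normrM.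
  by rewrite mxE; case: (hs (gidxc j)) => ->; rewrite ?normr1 ?normrN1 mul1r.
apply: propext; split => h j; [rewrite N | rewrite -N]; exact: h.
Qed.
End Main.

Lemma supp_Z (R : realType) p (s : 'rV[R]_p) (beta : 'cV[R]_p) :
  signrow s -> Defs.support (diag_mx s *m beta) = Defs.support beta.
Proof.
move=> hs; apply/setP => j; rewrite !inE mul_diag_mx mxE mulf_eq0 negb_or.
by case: (hs j) => ->; rewrite ?oner_neq0 ?oppr_eq0 ?oner_neq0.
Qed.

Theorem theorem1 (R : realType) (n p : nat) (beta : 'cV[R]_p) (lam : R)
    (s : 'rV[R]_p) :
  (exists j, beta j 0 != 0) ->
  (forall j, beta j 0 != 0 -> 0 < beta j 0) ->
  0 < lam ->
  (forall j, s 0 j = 1 \/ s 0 j = -1) ->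
  let Zt := diag_mx s in
  let betat := Zt *m beta in
  (forall X : 'M[R]_(n, p), admissible X betat ->
     phi_crit lam X betat = phi_crit lam (X *m Zt) beta) /\
  (forall Xs : 'M[R]_(n, p), is_maximizer lam beta Xs ->
     is_maximizer lam betat (Xs *m Zt)).
Proof.
move=> _ hpos _ hs0; cbv zeta.
have hs : signrow s := hs0.
have suppE := supp_Z beta hs.
have hb : forall j : 'I_#|Defs.support beta|, 0 < beta (gidx j) 0.
  by move=> j; have := enum_valP j; rewrite inE => /hpos.
have phiZ : forall X : 'M[R]_(n, p),
    phi_crit lam X (diag_mx s *m beta) = phi_crit lam (X *m diag_mx s) beta.
  move=> X; rewrite /phi_crit (S_gen lam X) (I_gen lam X).
  rewrite (S_gen lam (X *m diag_mx s)) (I_gen lam (X *m diag_mx s)) suppE.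
  by rewrite (gS_Z hs hb lam X) (gI_Z hs hb lam X).
have admZ : forall X : 'M[R]_(n, p),
    admissible X (diag_mx s *m beta) <-> admissible (X *m diag_mx s) beta.
  move=> X; rewrite /admissible !CA_gen !VA_gen suppE (CA_Z _ hs) (VA_Z _ hs).
  rewrite !unitmx_mul (SA_unit _ hs) /= andbT.
  split=> [[hX rest]|[hX rest]]; split=> //; first exact: design_Z.
  by rewrite -[X]mulmx1 -(ZZ hs) mulmxA; apply: design_Z.
split; first by move=> X _; exact: phiZ.
move=> Xs [admXs maxXs]; split.
  by apply/admZ; rewrite -mulmxA (ZZ hs) mulmx1.
move=> X /admZ hX; rewrite phiZ (phiZ (Xs *m diag_mx s)) -mulmxA (ZZ hs) mulmx1.
exact: maxXs.
Qed.
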